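(* Let $T$ be a decomposition tree of a distance-hereditary graph $G$, and let $v$ be an internal node of $T$ labeled $\otimes$ with left child $v_l$ and right child $v_r$, such that property (P) holds at $v_l$ and at $v_r$. Then $\hat\beta(v)=\hat\beta(v_l)+\hat\beta(v_r)$.
   Context: All graphs are finite, simple, undirected. For a graph $H$ and $S\subseteq V(H)$, $N_H[S]$ is $S$ together with all vertices adjacent to a vertex of $S$, and $H[S]$ is the induced subgraph. Graphs carry a ''twin set'': a single-vertex graph on $x$ has twin set $\{x\}$. For vertex-disjoint graphs $G_l,G_r$ with twin sets $TS(G_l),TS(G_r)$: the true twin operation $G_l\otimes G_r$ has vertex set $V(G_l)\cup V(G_r)$, edge set $E(G_l)\cup E(G_r)\cup\{uw: u\in TS(G_l), w\in TS(G_r)\}$ and twin set $TS(G_l)\cup TS(G_r)$; the false twin operation $G_l\odot G_r$ has vertex set $V(G_l)\cup V(G_r)$, edge set $E(G_l)\cup E(G_r)$, twin set $TS(G_l)\cup TS(G_r)$; the attachment operation $G_l\oplus G_r$ has the same vertex and edge sets as $G_l\otimes G_r$ and twin set $TS(G_l)$. A decomposition tree $T$ of $G$ is a rooted binary tree whose leaves are in bijection with $V(G)$, each internal node having a left and a right child and a label in $\{\otimes,\odot,\oplus\}$; for each node $v$ define $\hat G(v)$ and $\hat{TS}(v)$ recursively: for a leaf $x$, the single-vertex graph on $x$ with twin set $\{x\}$; for an internal node $v$ with label $\circ$ and children $v_l,v_r$, $\hat G(v)=\hat G(v_l)\circ\hat G(v_r)$ with the corresponding twin set; one requires $\hat G(\text{root})=G$.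 Then $\hat G(v)$ is the subgraph of $G$ induced by the set $\hat V(v)$ of leaves below $v$. For a node $u$ and $0\le k\le|\hat{TS}(u)|$, call $S\subseteq\hat V(u)$ $k$-feasible if $\hat V(u)\setminus\hat{TS}(u)\subseteq N_{\hat G(u)}[S]$ and there is $X\subseteq S\cap\hat{TS}(u)$ with $|X|=k$ such that $\hat G(u)[S\setminus X]$ has a perfect matching. $\hat\gamma_k(u)$ is the minimum size of a $k$-feasible set. $\hat{min}(u)=\min\{\hat\gamma_k(u):0\le k\le|\hat{TS}(u)|\}$, and $\hat\alpha(u)$, $\hat\beta(u)$ are the smallest and the largest $k$ with $\hat\gamma_k(u)=\hat{min}(u)$. Property (P) holds at $u$ if for every $0\le k\le|\hat{TS}(u)|$: $\hat\gamma_k(u)=\hat{min}(u)+\hat\alpha(u)-k$ when $k\le\hat\alpha(u)$; $\hat\gamma_k(u)=\hat{min}(u)+k-\hat\beta(u)$ when $k\ge\hat\beta(u)$; $\hat\gamma_k(u)=\hat{min}(u)$ when $\hat\alpha(u)<k<\hat\beta(u)$ and $k-\hat\alpha(u)$ is even; and $\hat\gamma_k(u)=\hat{min}(u)+1$ otherwise. *)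

(* Defs.v *)
From mathcomp Require Import all_boot.
Set Implicit Arguments. Unset Strict Implicit. Unset Printing Implicit Defensive.

Definition simple_graph (T : finType) (G : rel T) : Prop :=
  (forall x, ~~ G x x) /\ (forall x y, G x y = G y x).

(** [dist_le G W x y n]: in the induced subgraph G[W] there is an x-y walk
    of length at most n (x is assumed to lie in W). *)
Definition dist_le (T : finType) (G : rel T) (W : {set T}) (x y : T) (n : nat) : Prop :=
  exists p : seq T, [&& path G x p, last x p == y, all (fun z => z \in W) p
                      & size p <= n].

Definition dist_hereditary (T : finType) (G : rel T) : Prop :=
  forall W : {set T},
    (forall x y, x \in W -> y \in W -> exists n, dist_le G W x y n) ->
    forall x y n, x \in W -> y \in W ->
      dist_le G [set: T] x y n -> dist_le G W x y n.

(** Labels: true twin (otimes), false twin (odot), attachment (oplus). *)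
Inductive op := Otimes | Odot | Oplus.

Inductive dtree (T : finType) :=
| Leaf of T
| Node of op & dtree T & dtree T.
Arguments Leaf {T}.
Arguments Node {T}.

Fixpoint leaves (T : finType) (t : dtree T) : seq T :=
  match t with Leaf x => [:: x] | Node _ l r => leaves l ++ leaves r end.

Definition hatV (T : finType) (t : dtree T) : {set T} := [set x in leaves t].

Fixpoint hatTS (T : finType) (t : dtree T) : {set T} :=
  match t with
  | Leaf x => [set x]
  | Node Otimes l r => hatTS l :|: hatTS r
  | Node Odot l r => hatTS l :|: hatTS r
  | Node Oplus l _ => hatTS l
  end.

Fixpoint hatE (T : finType) (t : dtree T) : rel T :=
  match t with
  | Leaf _ => fun _ _ => false
  | Node o l r => fun x y =>
      [|| hatE l x y, hatE r x y |
        (if o is Odot then false else true) &&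
        (((x \in hatTS l) && (y \in hatTS r)) || ((y \in hatTS l) && (x \in hatTS r)))]
  end.

Fixpoint is_node (T : finType) (v t : dtree T) : Prop :=
  v = t \/ match t with Leaf _ => False | Node _ l r => is_node v l \/ is_node v r end.

Definition decomp_tree (T : finType) (G : rel T) (t : dtree T) : Prop :=
  uniq (leaves t) /\ (forall x : T, x \in leaves t) /\
  (forall x y : T, hatE t x y = G x y).

Definition closed_nbhd (T : finType) (e : rel T) (V S : {set T}) : {set T} :=
  S :|: [set x in V | [exists y in S, e x y]].

Definition has_perfect_matching (T : finType) (e : rel T) (W : {set T}) : bool :=
  [exists M : {set {set T}},
    partition M W &&
    [forall m in M, exists x, exists y, [&& x != y, e x y & m == [set x; y]]]].

Definition feasible (T : finType) (u : dtree T) (k : nat) (S : {set T}) : bool :=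
  [&& S \subset hatV u,
      (hatV u :\: hatTS u) \subset closed_nbhd (hatE u) (hatV u) S &
      [exists X : {set T}, [&& X \subset S :&: hatTS u, #|X| == k &
                             has_perfect_matching (hatE u) (S :\: X)]]].

(** \hat\gamma_k(u): minimum size of a k-feasible set (#|T|.+1, i.e.
    "infinity", if there is none). *)
Definition gammak (T : finType) (u : dtree T) (k : nat) : nat :=
  \big[minn/#|T|.+1]_(S : {set T} | feasible u k S) #|S|.

Definition hmin (T : finType) (u : dtree T) : nat :=
  \big[minn/#|T|.+1]_(k < #|hatTS u|.+1) gammak u k.

Definition halpha (T : finType) (u : dtree T) : nat :=
  \big[minn/#|hatTS u|]_(k < #|hatTS u|.+1 | gammak u k == hmin u) (k : nat).

Definition hbeta (T : finType) (u : dtree T) : nat :=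
  \max_(k < #|hatTS u|.+1 | gammak u k == hmin u) (k : nat).

Definition propP (T : finType) (u : dtree T) : Prop :=
  forall k, k <= #|hatTS u| ->
    [/\ k <= halpha u -> gammak u k = hmin u + (halpha u - k),
        hbeta u <= k -> gammak u k = hmin u + (k - hbeta u),
        halpha u < k < hbeta u -> ~~ odd (k - halpha u) -> gammak u k = hmin u &
        halpha u < k < hbeta u -> odd (k - halpha u) -> gammak u k = (hmin u).+1].

(* Main.v *)
Require Import Defs.
From mathcomp Require Import all_boot.
Set Implicit Arguments. Unset Strict Implicit. Unset Printing Implicit Defensive.

Section S.
Variable T : finType.
Implicit Types (u l r : dtree T) (e : rel T) (V W S X : {set T}).

Lemma hatV_node o l r : hatV (Node o l r) = hatV l :|: hatV r.
Proof. by apply/setP=> x; rewrite /hatV !inE /= mem_cat. Qed.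

Lemma hatV_leaf (x : T) : hatV (Leaf x) = [set x].
Proof. by apply/setP=> y; rewrite /hatV !inE. Qed.

Lemma hatTS_sub u : hatTS u \subset hatV u.
Proof.
elim: u => [x|o l IHl r IHr]; first by rewrite hatV_leaf.
rewrite hatV_node; case: o => /=; [exact: setUSS|exact: setUSS|].
by apply: subset_trans IHl _; apply: subsetUl.
Qed.

Lemma hatTS_n0 u : exists x, x \in hatTS u.
Proof.
elim: u => [x|o l [y IHl] r [z IHr]]; first by exists x; rewrite inE.
by case: o => /=; exists y; rewrite ?inE ?IHl.
Qed.

Lemma hatE_V u x y : hatE u x y -> (x \in hatV u) && (y \in hatV u).
Proof.
elim: u => [z|o l IHl r IHr] //=; rewrite hatV_node !in_setU.
have sl := subsetP (hatTS_sub l); have sr := subsetP (hatTS_sub r).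
case/or3P => [/IHl/andP[-> ->] //| /IHr/andP[-> ->]|]; first by rewrite !orbT.
case: o => //= /orP[]/andP[/sl -> /sr ->]; by rewrite ?orbT.
Qed.

Lemma hatE_sym u x y : hatE u x y = hatE u y x.
Proof.
elim: u => [z|o l IHl r IHr] //=; rewrite IHl IHr; congr [|| _, _ | _].
by case: o => //=; rewrite orbC.
Qed.

Lemma uniq_disj o l r : uniq (leaves (Node o l r)) ->
  forall x, x \in hatV l -> x \in hatV r -> False.
Proof.
rewrite /= cat_uniq => /and3P[_ H _] x; rewrite /hatV !inE => xl xr.
by move/negP: H; apply; apply/hasP; exists x.
Qed.

Lemma uniq_l o l r : uniq (leaves (Node o l r)) -> uniq (leaves l).
Proof. by rewrite /= cat_uniq => /and3P[]. Qed.
Lemma uniq_r o l r : uniq (leaves (Node o l r)) -> uniq (leaves r).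
Proof. by rewrite /= cat_uniq => /and3P[]. Qed.

Lemma is_node_uniq (v t : dtree T) : is_node v t -> uniq (leaves t) -> uniq (leaves v).
Proof.
elim: t => [x|o l IHl r IHr] /=; first by case=> // ->.
case=> [-> //|[H|H]] U; [apply: IHl (uniq_l U) | apply: IHr (uniq_r U)]; done.
Qed.

Lemma pm0 e : has_perfect_matching e set0.
Proof.
apply/existsP; exists set0; rewrite partition_set0 eqxx /=.
by apply/forall_inP => m; rewrite inE.
Qed.

Lemma pm_edge e a b : a != b -> e a b -> has_perfect_matching e [set a; b].
Proof.
move=> ab eab; apply/existsP; exists [set [set a; b]].
rewrite /partition cover1 eqxx trivIset1 /= inE.
have -> : (set0 == [set a; b]) = false.
  by apply/negP => /eqP /setP /(_ a); rewrite !inE eqxx.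
apply/forall_inP => m; rewrite inE => /eqP ->.
by apply/existsP; exists a; apply/existsP; exists b; rewrite ab eab eqxx.
Qed.

Lemma pm_union e W1 W2 : has_perfect_matching e W1 -> has_perfect_matching e W2 ->
  (forall x, x \in W1 -> x \in W2 -> False) -> has_perfect_matching e (W1 :|: W2).
Proof.
move=> /existsP[M1 /andP[P1 E1]] /existsP[M2 /andP[P2 E2]] D.
apply/existsP; exists (M1 :|: M2); apply/andP; split.
  case/and3P: P1 => /eqP c1 t1 n1; case/and3P: P2 => /eqP c2 t2 n2.
  rewrite /partition /cover bigcup_setU -/(cover M1) -/(cover M2) c1 c2 eqxx /=.
  rewrite inE (negbTE n1) (negbTE n2) andbT; apply: trivIsetU => //.
  rewrite c1 c2 disjoint_subset; apply/subsetP => x /D H; rewrite inE; by apply/negP => /H.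
apply/forall_inP => m; rewrite inE => /orP[].
  by move/forall_inP: E1; apply.
by move/forall_inP: E2; apply.
Qed.

Lemma pm_mono e e' W : has_perfect_matching e W ->
  (forall x y, x \in W -> y \in W -> e x y -> e' x y) -> has_perfect_matching e' W.
Proof.
move=> /existsP[M /andP[P E]] H; apply/existsP; exists M; rewrite P /=.
apply/forall_inP => m mM; move/forall_inP: E => /(_ m mM).
case/existsP => x /existsP[y /and3P[xy exy /eqP me]].
have sm := subsetP (partitionS P mM).
apply/existsP; exists x; apply/existsP; exists y; rewrite xy me eqxx andbT /=.
by apply: H => //; apply: sm; rewrite me !inE eqxx ?orbT.
Qed.


Lemma cn_in e V S x : x \in S -> x \in closed_nbhd e V S.
Proof. by rewrite /closed_nbhd inE => ->. Qed.

Lemma cn_nb e V S x y : x \in V -> y \in S -> e x y -> x \in closed_nbhd e V S.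
Proof.
move=> xV yS exy; rewrite /closed_nbhd !inE xV /= orbC; apply/orP; left.
by apply/exists_inP; exists y.
Qed.

Lemma cn_elim e V S x : x \in closed_nbhd e V S ->
  x \in S \/ exists2 y, y \in S & e x y.
Proof.
rewrite /closed_nbhd !inE => /orP[->|/andP[_ /exists_inP[y yS exy]]]; first by left.
by right; exists y.
Qed.

Lemma cn_mono e e' V (V' S S' : {set T}) : S \subset S' -> V \subset V' ->
  (forall x y, e x y -> e' x y) ->
  closed_nbhd e V S \subset closed_nbhd e' V' S'.
Proof.
move=> /subsetP sS /subsetP sV se; apply/subsetP => x.
rewrite /closed_nbhd !inE => /orP[/sS -> //|/andP[/sV xV /exists_inP[y yS exy]]].
by rewrite xV /= orbC; apply/orP; left; apply/exists_inP; exists y; [apply: sS|apply: se].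
Qed.

Lemma exist0 u : uniq (leaves u) -> exists S, [/\ S \subset hatV u,
  (hatV u :\: hatTS u) \subset closed_nbhd (hatE u) (hatV u) S &
  has_perfect_matching (hatE u) S].
Proof.
elim: u => [x|o l IHl r IHr] U.
  exists set0; rewrite sub0set hatV_leaf /= setDv sub0set; split => //; exact: pm0.
have D := uniq_disj U.
have [Sl [sl dl pl]] := IHl (uniq_l U).
have [Sr [sr dr pr]] := IHr (uniq_r U).
set u := Node o l r.
have el : forall x y, hatE l x y -> hatE u x y by move=> x y /= ->.
have er : forall x y, hatE r x y -> hatE u x y by move=> x y /= ->; rewrite orbT.
have pu : has_perfect_matching (hatE u) (Sl :|: Sr).
  apply: pm_union; [apply: pm_mono pl _ => x y _ _; exact: el
                  | apply: pm_mono pr _ => x y _ _; exact: er |].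
  by move=> x /(subsetP sl) xl /(subsetP sr) /(D x xl).
have su : Sl :|: Sr \subset hatV u by rewrite hatV_node setUSS.
have domL : forall S x, Sl :|: Sr \subset S -> x \in hatV l -> x \notin hatTS l ->
    x \in closed_nbhd (hatE u) (hatV u) S.
  move=> S x sS xl xt; have: x \in hatV l :\: hatTS l by rewrite inE xt xl.
  move/(subsetP dl); apply/subsetP/cn_mono => //.
  - by apply: subset_trans sS; apply: subsetUl.
  - by rewrite hatV_node subsetUl.
have domR : forall S x, Sl :|: Sr \subset S -> x \in hatV r -> x \notin hatTS r ->
    x \in closed_nbhd (hatE u) (hatV u) S.
  move=> S x sS xl xt; have: x \in hatV r :\: hatTS r by rewrite inE xt xl.
  move/(subsetP dr); apply/subsetP/cn_mono => //.
  - by apply: subset_trans sS; apply: subsetUr.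
  - by rewrite hatV_node subsetUr.
have tl := subsetP (hatTS_sub l); have tr := subsetP (hatTS_sub r).
have domLR : forall S x, Sl :|: Sr \subset S -> x \in hatV u ->
    x \notin hatTS l -> (x \notin hatTS r \/ x \in closed_nbhd (hatE u) (hatV u) S) ->
    x \in closed_nbhd (hatE u) (hatV u) S.
  move=> S x sS; rewrite {1}hatV_node in_setU => /orP[xl xtl _|xr _ [xtr|//]].
    exact: domL.
  exact: domR.
destruct o.
- exists (Sl :|: Sr); split => //; apply/subsetP => x; rewrite inE /= in_setU negb_or.
  case/andP => /andP[xtl xtr] xV; apply: domLR => //; by left.
- exists (Sl :|: Sr); split => //; apply/subsetP => x; rewrite inE /= in_setU negb_or.
  case/andP => /andP[xtl xtr] xV; apply: domLR => //; by left.
case: (boolP [exists a in Sl, a \in hatTS l]) => [/exists_inP[a aS atl]|nA].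
  exists (Sl :|: Sr); split => //; apply/subsetP => x; rewrite inE /=.
  case/andP => xtl xV; apply: domLR => //.
  case: (boolP (x \in hatTS r)) => xtr; [right|by left].
  apply: (cn_nb xV (y := a)); first by rewrite in_setU aS.
  by rewrite /= atl xtr !orbT.
case: (boolP (hatTS r \subset Sr)) => [sTr|/subsetPn[b btr bS]].
  exists (Sl :|: Sr); split => //; apply/subsetP => x; rewrite inE /=.
  case/andP => xtl xV; apply: domLR => //.
  case: (boolP (x \in hatTS r)) => xtr; [right|by left].
  by apply: cn_in; rewrite in_setU (subsetP sTr x xtr) orbT.
have [a atl] := hatTS_n0 l.
have aS : a \notin Sl by apply/negP => aS; move/exists_inP: nA; apply; exists a.
have al := tl a atl; have br := tr b btr.
have ab : a != b by apply/eqP => eab; apply: (D a al); rewrite eab.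
have eab : hatE u a b by rewrite /= atl btr !orbT.
exists ((Sl :|: Sr) :|: [set a; b]); split.
- by rewrite subUset su /= subUset !sub1set hatV_node !in_setU al br orbT.
- apply/subsetP => x; rewrite inE /=.
  case/andP => xtl xV; apply: domLR => //; first exact: subsetUl.
  case: (boolP (x \in hatTS r)) => xtr; [right|by left].
  apply: (cn_nb xV (y := a)); first by rewrite !inE eqxx !orbT.
  by rewrite /= atl xtr !orbT.
apply: pm_union => //; first exact: pm_edge.
move=> x; rewrite in_setU !inE => /orP[xS|xS] /orP[/eqP xa|/eqP xb]; subst x.
- by rewrite xS in aS.
- by apply: (D b) => //; apply: (subsetP sl).
- by apply: (D a) => //; apply: (subsetP sr).
- by rewrite xS in bS.
Qed.

Lemma feasible0 u : uniq (leaves u) -> exists S, feasible u 0 S.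
Proof.
case/exist0 => S [s d p]; exists S; rewrite /feasible s d /=.
by apply/existsP; exists set0; rewrite sub0set cards0 setD0 p.
Qed.

Lemma bigmin_le (I : eqType) (rr : seq I) (P : pred I) (F : I -> nat) d i0 :
  i0 \in rr -> P i0 -> \big[minn/d]_(i <- rr | P i) F i <= F i0.
Proof.
elim: rr => // a rr IH; rewrite inE big_cons => /orP[/eqP <-|H] Pi0.
  by rewrite Pi0 geq_minl.
by case: (P a); [rewrite (leq_trans (geq_minr _ _)) // IH | exact: IH].
Qed.

Lemma gammak_le u k S : feasible u k S -> gammak u k <= #|S|.
Proof. by move=> F; apply: bigmin_le => //; exact: mem_index_enum. Qed.

Lemma gammak_spec u k : gammak u k = #|T|.+1 \/ exists2 S, feasible u k S & #|S| = gammak u k.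
Proof.
rewrite /gammak; elim/big_ind: _ => [|x y Hx Hy|S F]; [by left| |by right; exists S].
by case: (leqP x y).
Qed.

Lemma feasible_le u k S : feasible u k S -> k <= #|hatTS u|.
Proof.
case/and3P => _ _ /existsP[X /and3P[sX /eqP <- _]]; apply: subset_leq_card.
by apply: subset_trans sX _; apply: subsetIr.
Qed.

Lemma hmin_le u k : k <= #|hatTS u| -> hmin u <= gammak u k.
Proof.
move=> h; rewrite /hmin.
exact: (@bigmin_le _ _ _ (fun i : 'I_#|hatTS u|.+1 => gammak u i) _ (Ordinal (h : k < #|hatTS u|.+1)) (mem_index_enum _)).
Qed.

Lemma hmin_spec u : hmin u = #|T|.+1 \/ exists2 k, k <= #|hatTS u| & gammak u k = hmin u.
Proof.
rewrite /hmin; elim/big_ind: _ => [|x y Hx Hy|i _]; [by left| |].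
  by case: (leqP x y).
by right; exists i => //; rewrite -ltnS ltn_ord.
Qed.

Lemma hbeta_ge u k : k <= #|hatTS u| -> gammak u k = hmin u -> k <= hbeta u.
Proof.
move=> h e; rewrite /hbeta.
have := @leq_bigmax_cond _ (fun i : 'I_#|hatTS u|.+1 => gammak u i == hmin u)
   (fun i => nat_of_ord i) (Ordinal (h : k < #|hatTS u|.+1)).
by apply; rewrite /= e.
Qed.

Lemma hbeta_spec u : (exists2 k, k <= #|hatTS u| & gammak u k = hmin u) ->
  hbeta u <= #|hatTS u| /\ gammak u (hbeta u) = hmin u.
Proof.
case=> k0 h0 e0.
have : hbeta u = 0 \/ (hbeta u <= #|hatTS u| /\ gammak u (hbeta u) = hmin u).
  rewrite /hbeta; elim/big_ind: _ => [|x y Hx Hy|i /eqP e]; [by left| |].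
    by case: (leqP x y).
  by right; split => //; rewrite -ltnS ltn_ord.
case=> [H|//]; have := hbeta_ge h0 e0; rewrite H leqn0 => /eqP k00.
by rewrite -k00; split.
Qed.


Lemma card_disjU (A B : {set T}) : (forall x, x \in A -> x \in B -> False) ->
  #|A :|: B| = #|A| + #|B|.
Proof.
move=> D; rewrite -cardsUI.
have -> : A :&: B = set0.
  by apply/setP => x; rewrite in_setI in_set0; apply/negP => /andP[/D].
by rewrite cards0 addn0.
Qed.

Lemma card_split (A B C : {set T}) : C \subset A :|: B ->
  (forall x, x \in A -> x \in B -> False) -> #|C| = #|C :&: A| + #|C :&: B|.
Proof.
move=> H D; rewrite -card_disjU; first by rewrite -setIUr (setIidPl H).
by move=> x /setIP[_ /D] H' /setIP[_ /H'].
Qed.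

Lemma splitL l r (E : rel T) S X :
  (forall x, x \in hatV l -> x \in hatV r -> False) ->
  (forall x y, E x y = [|| hatE l x y, hatE r x y |
      ((x \in hatTS l) && (y \in hatTS r)) || ((y \in hatTS l) && (x \in hatTS r))]) ->
  (hatV l :|: hatV r) :\: (hatTS l :|: hatTS r) \subset closed_nbhd E (hatV l :|: hatV r) S ->
  X \subset S :&: (hatTS l :|: hatTS r) ->
  has_perfect_matching E (S :\: X) ->
  exists k1, feasible l k1 (S :&: hatV l) /\ #|X :&: hatV l| <= k1.
Proof.
move=> D HE dom sX /existsP[M /andP[PM EM]].
have tl := subsetP (hatTS_sub l); have tr := subsetP (hatTS_sub r).
have Esym : forall x y, E x y = E y x.
  by move=> x y; rewrite !HE hatE_sym (hatE_sym r) (orbC (_ && _)).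
have crossL : forall x z, x \in hatV l -> z \notin hatV l -> E x z -> x \in hatTS l.
  move=> x z xl zl; rewrite HE.
  case/or3P => [/hatE_V/andP[_ zl']| /hatE_V/andP[xr _] | /orP[/andP[-> _] // | /andP[zt xt]]].
  - by rewrite zl' in zl.
  - by case: (D x).
  - by case: (D x xl (tr x xt)).
have inL : forall x y, x \in hatV l -> y \in hatV l -> E x y -> hatE l x y.
  move=> x y xl yl; rewrite HE.
  case/or3P => [// | /hatE_V/andP[xr _] | /orP[/andP[_ yt]|/andP[_ xt]]].
  - by case: (D x).
  - by case: (D y yl (tr y yt)).
  - by case: (D x xl (tr x xt)).
set Ml := [set m in M | m \subset hatV l].
set C := cover Ml.
set A := ((S :\: X) :&: hatV l) :\: C.
exists #|(X :&: hatV l) :|: A|; split; last by apply: subset_leq_card; apply: subsetUl.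
have cM := cover_partition PM.
have C_sub : C \subset (S :\: X) :&: hatV l.
  apply/subsetP => x /bigcupP[m]; rewrite in_set => /andP[mM ml] xm.
  by rewrite in_setI (subsetP ml x xm) andbT -cM; apply/bigcupP; exists m.
rewrite /feasible subsetIr /=; apply/andP; split.
  apply/subsetP => w; rewrite in_setD => /andP[wt wl].
  have wr : w \notin hatTS r by apply/negP => /tr /(D w wl).
  have : w \in (hatV l :|: hatV r) :\: (hatTS l :|: hatTS r).
    by rewrite in_setD !in_setU (negbTE wt) (negbTE wr) wl.
  move/(subsetP dom)/cn_elim => [wS|[y yS Ewy]].
    by apply: cn_in; rewrite in_setI wS wl.
  rewrite HE in Ewy.
  case/or3P: Ewy => [hl | /hatE_V/andP[wr' _] | /orP[/andP[wt' _]|/andP[_ wt']]].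
  - have /andP[_ yl] := hatE_V hl.
    by apply: (cn_nb wl (y := y)) => //; rewrite in_setI yS yl.
  - by case: (D w).
  - by rewrite wt' in wt.
  - by rewrite wt' in wr.
apply/existsP; exists ((X :&: hatV l) :|: A); rewrite eqxx /=; apply/andP; split.
  apply/subsetP => x; rewrite in_setU => /orP[].
    rewrite in_setI => /andP[xX xl]; have := subsetP sX x xX.
    rewrite !in_setI in_setU => /andP[xS /orP[xt|xt]].
      by rewrite xS xl xt.
    by case: (D x xl (tr x xt)).
  rewrite /A in_setD in_setI in_setD => /andP[xC /andP[/andP[xnX xS] xl]].
  rewrite !in_setI xS xl /=.
  have : x \in cover M by rewrite cM in_setD xnX xS.
  case/bigcupP => m mM xm.
  have mnl : ~~ (m \subset hatV l).
    apply/negP => ml; move/negP: xC; apply; apply/bigcupP; exists m => //.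
    by rewrite in_set mM ml.
  move/forall_inP: EM => /(_ m mM) /existsP[a /existsP[b /and3P[ab Eab /eqP me]]].
  move: xm mnl; rewrite me subUset !sub1set in_set2 => /orP[/eqP xa|/eqP xb]; subst x.
    by rewrite xl /= => bl; exact: crossL xl bl Eab.
  by rewrite xl andbT => al; apply: crossL xl al _; rewrite Esym.
have eqC : (S :&: hatV l) :\: ((X :&: hatV l) :|: A) = C.
  apply/setP => x; rewrite /A !in_setD !in_setI !in_setU !in_setD !in_setI.
  case xC: (x \in C).
    have := subsetP C_sub x xC; rewrite in_setI in_setD => /andP[/andP[xnX xS] xl].
    by rewrite xS xl (negbTE xnX).
  rewrite /= in_setD;   by case: (x \in X); case: (x \in S); case: (x \in hatV l).
rewrite eqC; apply/existsP; exists Ml; apply/andP; split.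
  rewrite /partition eqxx /=; apply/andP; split.
    apply: trivIsetS (partition_trivIset PM); apply/subsetP => m.
    by rewrite in_set => /andP[].
  by rewrite in_set (partition0 PM).
apply/forall_inP => m; rewrite in_set => /andP[mM ml].
move/forall_inP: EM => /(_ m mM) /existsP[a /existsP[b /and3P[ab Eab /eqP me]]].
apply/existsP; exists a; apply/existsP; exists b; rewrite ab me eqxx andbT /=.
by move: ml; rewrite me subUset !sub1set => /andP[al bl]; exact: inL.
Qed.


Lemma union_feas l r k1 k2 Sl Sr :
  (forall x, x \in hatV l -> x \in hatV r -> False) ->
  feasible l k1 Sl -> feasible r k2 Sr -> feasible (Node Otimes l r) (k1 + k2) (Sl :|: Sr).
Proof.
move=> D /and3P[sl dl /existsP[Xl /and3P[sXl /eqP cXl pl]]].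
move=> /and3P[sr dr /existsP[Xr /and3P[sXr /eqP cXr pr]]].
set u := Node Otimes l r.
have el : forall x y, hatE l x y -> hatE u x y by move=> x y /= ->.
have er : forall x y, hatE r x y -> hatE u x y by move=> x y /= ->; rewrite orbT.
have Xll : Xl \subset hatV l by apply: subset_trans sXl (subset_trans (subsetIl _ _) sl).
have Xrr : Xr \subset hatV r by apply: subset_trans sXr (subset_trans (subsetIl _ _) sr).
have XlS : Xl \subset Sl by apply: subset_trans sXl (subsetIl _ _).
have XrS : Xr \subset Sr by apply: subset_trans sXr (subsetIl _ _).
apply/and3P; split.
- by rewrite hatV_node; exact: setUSS.
- apply/subsetP => x; rewrite in_setD => /andP[xt].
  move: xt; rewrite /u /= in_setU negb_or => /andP[xtl xtr].
  rewrite {1}hatV_node in_setU => /orP[xl|xr].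
    have : x \in hatV l :\: hatTS l by rewrite in_setD xtl xl.
    move/(subsetP dl); apply/subsetP/cn_mono => //; first exact: subsetUl.
    by rewrite hatV_node subsetUl.
  have : x \in hatV r :\: hatTS r by rewrite in_setD xtr xr.
  move/(subsetP dr); apply/subsetP/cn_mono => //; first exact: subsetUr.
  by rewrite hatV_node subsetUr.
apply/existsP; exists (Xl :|: Xr); apply/and3P; split.
- apply/subsetP => x; rewrite in_setU => /orP[/(subsetP sXl)|/(subsetP sXr)];
    rewrite /= !in_setI !in_setU => /andP[-> ->]; by rewrite ?orbT.
- rewrite card_disjU ?cXl ?cXr //.
  by move=> x /(subsetP Xll) xl /(subsetP Xrr); apply: D.
have -> : (Sl :|: Sr) :\: (Xl :|: Xr) = (Sl :\: Xl) :|: (Sr :\: Xr).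
  apply/setP => x; rewrite !in_setD !in_setU !in_setD.
  case xSl: (x \in Sl).
    have xl := subsetP sl x xSl.
    have xnSr : x \notin Sr by apply/negP => /(subsetP sr) /(D x xl).
    have xnXr : x \notin Xr by apply/negP => /(subsetP XrS); apply/negP.
    by rewrite (negbTE xnSr) (negbTE xnXr) /= !orbF andbT.
  have xnXl : x \notin Xl by apply/negP => /(subsetP XlS); rewrite xSl.
  by rewrite (negbTE xnXl).
apply: pm_union.
- by apply: pm_mono pl _ => x y _ _; exact: el.
- by apply: pm_mono pr _ => x y _ _; exact: er.
move=> x; rewrite !in_setD => /andP[_ /(subsetP sl) xl] /andP[_ /(subsetP sr)].
exact: D.
Qed.

Lemma node_facts u : uniq (leaves u) ->
  [/\ hbeta u <= #|hatTS u|, exists2 S, feasible u (hbeta u) S & #|S| = hmin u,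
      forall k S, feasible u k S -> hmin u <= #|S| &
      forall k S, feasible u k S -> #|S| = hmin u -> k <= hbeta u].
Proof.
move=> U; have [S0 F0] := feasible0 U.
have hS0 : #|S0| <= #|T| by rewrite -cardsT subset_leq_card // subsetT.
have hm : hmin u <= #|T|.
  exact: leq_trans (@hmin_le u 0 (leq0n _)) (leq_trans (gammak_le F0) hS0).
have ex : exists2 k, k <= #|hatTS u| & gammak u k = hmin u.
  by case: (hmin_spec u) => // e; rewrite e ltnn in hm.
have [hb gb] := hbeta_spec ex.
split => //.
- case: (gammak_spec u (hbeta u)) => [e|[S F eS]]; first by move: hm; rewrite -gb e ltnn.
  by exists S => //; rewrite eS gb.
- by move=> k S F; apply: leq_trans (hmin_le (feasible_le F)) (gammak_le F).
move=> k S F eS; apply: hbeta_ge (feasible_le F) _; apply/eqP.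
by rewrite eqn_leq hmin_le ?(feasible_le F) // andbT -eS gammak_le.
Qed.

End S.

From mathcomp Require Import zify.

Lemma arith1 (a b ml mr h : nat) : h = a + b -> h <= ml + mr -> ml <= a -> mr <= b ->
  a = ml /\ b = mr /\ ml + mr = h.
Proof. lia. Qed.

Lemma arith2 (hv x y k1 k2 bl br : nat) : hv = x + y -> x <= k1 -> y <= k2 ->
  k1 <= bl -> k2 <= br -> bl + br <= hv -> hv = bl + br.
Proof. lia. Qed.

Theorem lemma9 (T : finType) (G : rel T) (t vl vr : dtree T) :
  simple_graph G -> dist_hereditary G -> decomp_tree G t ->
  is_node (Node Otimes vl vr) t ->
  propP vl -> propP vr ->
  hbeta (Node Otimes vl vr) = hbeta vl + hbeta vr.
Proof.
move=> _ _ [Ut _] node _ _.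
have U := is_node_uniq node Ut.
have D := uniq_disj U.
have D' : forall x, x \in hatV vr -> x \in hatV vl -> False by move=> x a b; exact: D x b a.
set v := Node Otimes vl vr.
have [bl_le [Sl Fl eSl] ml_le bl_max] := node_facts (uniq_l U).
have [br_le [Sr Fr eSr] mr_le br_max] := node_facts (uniq_r U).
have [bv_le [Sv Fv eSv] mv_le bv_max] := node_facts U.
have Fu := union_feas D Fl Fr.
have sl : {subset Sl <= hatV vl} by case/and3P: Fl => /subsetP.
have sr : {subset Sr <= hatV vr} by case/and3P: Fr => /subsetP.
have cU : #|Sl :|: Sr| = hmin vl + hmin vr.
  rewrite card_disjU ?eSl ?eSr // => x /sl xl /sr; exact: D.
have h1 := mv_le _ _ Fu; rewrite cU in h1.
case/and3P: Fv => sv dv /existsP[X /and3P[sX /eqP cX pX]].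
have HE : forall x y, hatE v x y = [|| hatE vl x y, hatE vr x y |
      ((x \in hatTS vl) && (y \in hatTS vr)) || ((y \in hatTS vl) && (x \in hatTS vr))].
  by [].
have HE' : forall x y, hatE v x y = [|| hatE vr x y, hatE vl x y |
      ((x \in hatTS vr) && (y \in hatTS vl)) || ((y \in hatTS vr) && (x \in hatTS vl))].
  move=> x y; rewrite HE.
  by case: (hatE vl x y); case: (hatE vr x y); case: (x \in hatTS vl); case: (y \in hatTS vr);
     case: (y \in hatTS vl); case: (x \in hatTS vr).
rewrite hatV_node in sv dv.
have dv1 : (hatV vl :|: hatV vr) :\: (hatTS vl :|: hatTS vr) \subset
    closed_nbhd (hatE v) (hatV vl :|: hatV vr) Sv by [].
have sX1 : X \subset Sv :&: (hatTS vl :|: hatTS vr) by [].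
have [k1 [F1 c1]] := splitL D HE dv1 sX1 pX.
have dv2 : (hatV vr :|: hatV vl) :\: (hatTS vr :|: hatTS vl) \subset
    closed_nbhd (hatE v) (hatV vr :|: hatV vl) Sv by rewrite [hatV vr :|: _]setUC [hatTS vr :|: _]setUC.
have sX2 : X \subset Sv :&: (hatTS vr :|: hatTS vl) by rewrite [hatTS vr :|: _]setUC.
have [k2 [F2 c2]] := splitL D' HE' dv2 sX2 pX.
have cSv := card_split sv D.
have sXv : X \subset hatV vl :|: hatV vr.
  by apply: subset_trans sX _; apply: subset_trans (subsetIl _ _) sv.
have cXv := card_split sXv D.
have m1 := ml_le _ _ F1; have m2 := mr_le _ _ F2.
have [e1 [e2 e3]] := arith1 (etrans (esym eSv) cSv) h1 m1 m2.
have h2 := bl_max _ _ F1 e1; have h3 := br_max _ _ F2 e2.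
have h4 := bv_max _ _ Fu; rewrite cU e3 in h4; have h5 := h4 erefl.
rewrite cX in cXv.
exact: arith2 cXv c1 c2 h2 h3 h5.
Qed.
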